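(* Let $G=(V,E,\Omega)$ be a connected finite graph with vertex set $V\subset\mathbb{R}^n$, edge set $E$ and a non-empty set $\Omega\subset V$, and let $f:\Omega\to\mathbb{R}^m$. Let $u\in E(f)$ and $x\in V\setminus\Omega$. Define $v:V\to\mathbb{R}^m$ by $v(y)=u(y)$ for $y\in V\setminus\{x\}$ and $v(x)=K(u,S(x))(x)$. If $K(u,S(x))(x)\neq u(x)$, then $v$ is tighter than $u$ on $G$.
   Context: For $x\in V$, $S(x):=\{y\in V:(x,y)\in E\}$ is the neighborhood of $x$ in $G$. $E(f)$ denotes the set of all extensions of $f$ to $V$, i.e. functions $V\to\mathbb{R}^m$ agreeing with $f$ on $\Omega$; $\|\cdot\|$ is the Euclidean norm. For a finite set $A\subset\mathbb{R}^n$, a map $g:A\to\mathbb{R}^m$ and $x\in\mathbb{R}^n\setminus A$, there is a unique $y\in\mathbb{R}^m$ minimizing $\sup_{a\in A}\|g(a)-y\|/\|a-x\|$; this minimizer is denoted $K(g,A)(x)$ (the Kirszbraun value of $g$ restricted to $A$ at $x$). For $w\in E(f)$ and $x\in V\setminus\Omega$, the local Lipschitz constant is $Lw(x):=\sup_{y\in S(x)}\|w(y)-w(x)\|/\|y-x\|$. For $u,v\in E(f)$, $v$ is tighter than $u$ on $G$ if $\max\{Lu(x):Lu(x)>Lv(x),\,x\in V\setminus\Omega\}>\max\{Lv(x):Lv(x)>Lu(x),\,x\in V\setminus\Omega\}$, with the convention that the maximum over the empty set is $0$. *)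

(* Defs.v *)
From HB Require Import structures.
From mathcomp Require Import all_boot all_order all_algebra.
Set Implicit Arguments. Unset Strict Implicit. Unset Printing Implicit Defensive.
Import Order.TTheory GRing.Theory Num.Theory.
Local Open Scope ring_scope.

Definition enorm (R : rcfType) (k : nat) (v : 'rV[R]_k) : R :=
  Num.sqrt (\sum_(i < k) v 0 i ^+ 2).

Section Graph.
Variables (R : rcfType) (n m : nat) (T : finType).
Variable pos : T -> 'rV[R]_n.
Variable e : rel T.

Definition nbhd (x : T) : {set T} := [set y | e x y].

(* sup_{a in A} ||g a - y|| / ||a - x|| (A finite; values are >= 0, so 0 is
   a neutral starting point for a nonempty A) *)
Definition Kratio (g : T -> 'rV[R]_m) (A : {set T}) (x : T) (y : 'rV[R]_m) : R :=
  \big[Num.max/0]_(a in A) (enorm (g a - y) / enorm (pos a - pos x)).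

(* y is the Kirszbraun value K(g,A)(x), i.e. the minimizer of Kratio *)
Definition is_Kvalue (g : T -> 'rV[R]_m) (A : {set T}) (x : T) (y : 'rV[R]_m) : Prop :=
  forall y', Kratio g A x y <= Kratio g A x y'.

Definition Lip (w : T -> 'rV[R]_m) (x : T) : R :=
  \big[Num.max/0]_(y in nbhd x) (enorm (w y - w x) / enorm (pos y - pos x)).

(* v is tighter than u on G (max over empty set is 0; Lip values are >= 0) *)
Definition tighter (Omega : {set T}) (v u : T -> 'rV[R]_m) : Prop :=
  \big[Num.max/0]_(z | (z \notin Omega) && (Lip v z < Lip u z)) Lip u z >
  \big[Num.max/0]_(z | (z \notin Omega) && (Lip u z < Lip v z)) Lip v z.

Definition extension (Omega : {set T}) (f : T -> 'rV[R]_m) (u : T -> 'rV[R]_m) : Prop :=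
  forall z, z \in Omega -> u z = f z.
End Graph.

(* Main.v *)
Require Import Defs.
From HB Require Import structures.
From mathcomp Require Import all_boot all_order all_algebra.
From mathcomp Require Import ring lra.
Import Order.TTheory GRing.Theory Num.Theory.
Set Implicit Arguments. Unset Strict Implicit.
Local Open Scope ring_scope.

Definition SS (R : rcfType) (k : nat) (v : 'rV[R]_k) : R := \sum_(i < k) v 0 i ^+ 2.

Lemma SS_ge0 (R : rcfType) k (v : 'rV[R]_k) : 0 <= SS v.
Proof. by apply: sumr_ge0 => i _; rewrite sqr_ge0. Qed.

Lemma SS_gt0 (R : rcfType) k (v : 'rV[R]_k) : v != 0 -> 0 < SS v.
Proof.
move=> nz; rewrite lt_def SS_ge0 andbT; apply/negP => /eqP.
rewrite /SS => /eqP; rewrite psumr_eq0; last by move=> i _; rewrite sqr_ge0.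
move/allP => H; move/negP: nz; apply; apply/eqP/matrixP => i j.
rewrite (ord1 i) mxE; have := H j (mem_index_enum _).
by rewrite sqrf_eq0 => /eqP.
Qed.

Lemma enorm_ge0 (R : rcfType) k (v : 'rV[R]_k) : 0 <= enorm v.
Proof. exact: sqrtr_ge0. Qed.

Lemma enorm_gt0 (R : rcfType) k (v : 'rV[R]_k) : v != 0 -> 0 < enorm v.
Proof. by move=> nz; rewrite /enorm sqrtr_gt0; apply: SS_gt0. Qed.

Lemma SS_opp (R : rcfType) k (v : 'rV[R]_k) : SS (- v) = SS v.
Proof. by apply: eq_bigr => i _; rewrite mxE sqrrN. Qed.

Lemma enorm_opp (R : rcfType) k (v : 'rV[R]_k) : enorm (- v) = enorm v.
Proof. by rewrite /enorm -/(SS _) -/(SS v) SS_opp. Qed.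

Lemma enorm_le (R : rcfType) k (v : 'rV[R]_k) c : enorm v <= c -> SS v <= c ^+ 2.
Proof.
move=> H; have h0 := enorm_ge0 v.
rewrite -(@sqr_sqrtr _ (SS v)) ?SS_ge0 //; rewrite /enorm in H h0.
by rewrite -/(SS v) in H h0; nra.
Qed.

Lemma enorm_lt (R : rcfType) k (v : 'rV[R]_k) c : 0 <= c -> SS v < c ^+ 2 -> enorm v < c.
Proof.
move=> c0 H; have c2 : 0 < c ^+ 2 by apply: le_lt_trans H; apply: SS_ge0.
by rewrite -(ger0_norm c0) -sqrtr_sqr /enorm ltr_sqrt.
Qed.

Lemma SS_par (R : rcfType) k (g y1 y2 : 'rV[R]_k) :
  SS (g - 2^-1 *: (y1 + y2)) * 4 + SS (y1 - y2) = 2 * SS (g - y1) + 2 * SS (g - y2).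
Proof.
rewrite /SS mulr_suml !mulr_sumr -!big_split /=; apply: eq_bigr => i _.
by rewrite !mxE; field.
Qed.

Section BM.
Variables (R : rcfType) (I : finType) (P : pred I) (F : I -> R).
Lemma bmax_ge0 : 0 <= \big[Num.max/0]_(i | P i) F i.
Proof. by elim/big_rec: _ => // i x _ hx; rewrite le_max hx orbT. Qed.
Lemma bmax_le c : 0 <= c -> (forall i, P i -> F i <= c) -> \big[Num.max/0]_(i | P i) F i <= c.
Proof. by move=> c0 H; apply: (big_ind (fun x => x <= c)) => // a b ha hb; rewrite ge_max ha. Qed.
Lemma bmax_lt c : 0 < c -> (forall i, P i -> F i < c) -> \big[Num.max/0]_(i | P i) F i < c.
Proof. by move=> c0 H; apply: (big_ind (fun x => x < c)) => // a b ha hb; rewrite gt_max ha. Qed.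
Lemma bmax_ge j : P j -> F j <= \big[Num.max/0]_(i | P i) F i.
Proof. by move=> Pj; rewrite (bigD1 j) //= le_max lexx. Qed.
End BM.

Unset Implicit Arguments.

Theorem mainTheorem1 (R : rcfType) (n m : nat) (T : finType)
  (pos : T -> 'rV[R]_n) (e : rel T) (Omega : {set T})
  (f : T -> 'rV[R]_m) (u : T -> 'rV[R]_m) (x : T) (Kx : 'rV[R]_m) :
  injective pos ->
  symmetric e -> irreflexive e ->
  (forall a b : T, connect e a b) ->
  Omega != set0 ->
  extension Omega f u ->
  x \notin Omega ->
  is_Kvalue pos u (nbhd e x) x Kx ->
  Kx != u x ->
  tighter pos e Omega (fun y => if y == x then Kx else u y) u.
Proof.
move=> pinj esym eirr conn Om0 ext xO Kv Kne.
set v := fun y => if y == x then Kx else u y.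
set S := nbhd e x.
have [y0 y0S] : exists y0, y0 \in S.
  case/set0Pn: Om0 => w wO.
  have wx : w != x by apply: contraNneq xO => <-.
  case/connectP: (conn x w) => p pth lst.
  case: p pth lst => [|y p] /= pth lst; first by rewrite lst eqxx in wx.
  by case/andP: pth => exy _; exists y; rewrite inE.
have Sneq : forall a, a \in S -> a != x.
  by move=> a; rewrite inE; apply: contraTneq => ->; rewrite eirr.
have dpos : forall a, a \in S -> 0 < enorm (pos a - pos x).
  move=> a aS; apply: enorm_gt0; rewrite subr_eq0.
  by apply: contra (Sneq a aS) => /eqP /pinj ->.
set L := Lip pos e u x.
set K := Kratio pos u S x Kx.
have LK : L = Kratio pos u S x (u x) by [].
have KL : K <= L by rewrite LK; apply: Kv.
have L0 : 0 <= L by apply: bmax_ge0.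
have K0 : 0 <= K by apply: bmax_ge0.
have term : forall g y a, a \in S ->
    enorm (g a - y) / enorm (pos a - pos x) <= Kratio pos g S x y.
  by move=> g y a aS; apply: (bmax_ge (P := fun a => a \in S)).
have C : K < L.
  set mid := 2^-1 *: (Kx + u x).
  have tlt : forall a, a \in S -> enorm (u a - mid) / enorm (pos a - pos x) < L.
    move=> a aS; have d0 := dpos a aS.
    have h1 : enorm (u a - Kx) <= L * enorm (pos a - pos x).
      by rewrite -ler_pdivrMr //; apply: le_trans KL; apply: term.
    have h2 : enorm (u a - u x) <= L * enorm (pos a - pos x).
      by rewrite -ler_pdivrMr // LK; apply: term.
    rewrite ltr_pdivrMr //; apply: enorm_lt; first by apply: mulr_ge0 => //; apply: ltW.
    have := SS_par (u a) Kx (u x).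
    have : 0 < SS (Kx - u x) by apply: SS_gt0; rewrite subr_eq0.
    move: (enorm_le h1) (enorm_le h2); lra.
  have Lp : 0 < L.
    apply: le_lt_trans (tlt y0 y0S); apply: divr_ge0; apply: enorm_ge0.
  apply: le_lt_trans (Kv mid) _.
  by apply: bmax_lt => // a aS; apply: tlt.
have A : Lip pos e v x = K.
  apply: eq_bigr => y yS; rewrite /v eqxx (negPf (Sneq y yS)) //.
have D : forall z, Lip pos e v z <= Num.max (Lip pos e u z) K.
  move=> z; case: (eqVneq z x) => [->|zx]; first by rewrite A le_max lexx orbT.
  apply: bmax_le; first by rewrite le_max K0 orbT.
  move=> y yz; rewrite /v (negPf zx); case: (eqVneq y x) yz => [->|yx] yz.
    rewrite le_max; apply/orP; right.
    have zS : z \in S by rewrite inE esym; rewrite inE in yz.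
    by rewrite -enorm_opp opprB -(enorm_opp (pos x - pos z)) opprB; apply: term.
  rewrite le_max; apply/orP; left.
  by apply: (bmax_ge (P := fun a => a \in nbhd e z) (fun y => enorm (u y - u z) / enorm (pos y - pos z))).
rewrite /tighter.
apply: (@le_lt_trans _ _ K).
  apply: bmax_le => // z /andP [_ hz].
  have := D z; rewrite le_max => /orP [h|//].
  by move: (lt_le_trans hz h); rewrite ltxx.
apply: (lt_le_trans C).
apply: (bmax_ge (P := fun z => (z \notin Omega) && (Lip pos e v z < Lip pos e u z)) (fun z => Lip pos e u z)).
by rewrite xO A C.
Qed.
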